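(* Let $l\ge 1$, $d=2l+1$, and let $V=\mathbb{F}_3^{d}$ (or $S^d$ with $|S|=3$). Define relations on $V$: $S_0=\{(\mathbf x,\mathbf x)\}$, and for $j=1,2,3$, $S_j=\{(\mathbf x,\mathbf y): \delta(\mathbf x,\mathbf y)\ge 1,\ \delta(\mathbf x,\mathbf y)\equiv j\pmod 3\}$, where $\delta$ is the Hamming distance (this is a three-class association scheme, the KSD-scheme). Let $A_0=I,A_1,A_2,A_3$ be the adjacency matrices of $S_0,\dots,S_3$. Then $$A_1^3=\big(3^{4l-1}+(-1)^l3^{3l}+5\cdot 3^{2l-1}\big)A_1+\big(3^{4l-1}+(-1)^l3^{3l}+2\cdot 3^{2l-1}\big)(J-A_1),$$ $$A_2^3=\big(3^{4l-1}-(-1)^l3^{3l}+5\cdot 3^{2l-1}\big)A_2+\big(3^{4l-1}-(-1)^l3^{3l}+2\cdot 3^{2l-1}\big)(J-A_2),$$ $$(A_3+I)^3=\big(3^{4l-1}+2\cdot 3^{2l-1}\big)(A_3+I)+\big(3^{4l-1}-3^{2l-1}\big)(J-A_3-I).$$ Consequently $A_1$, $A_2$, $A_3+I$ are incidence matrices of three non-isomorphic symmetric partial geometric designs with parameters $(v,k;\alpha,\beta)$: $\big(3^{2l+1},\ 3^{2l}+(-1)^l3^l;\ 3^{4l-1}+(-1)^l3^{3l}+2\cdot 3^{2l-1},\ 3^{4l-1}+(-1)^l3^{3l}+5\cdot 3^{2l-1}\big)$, $\big(3^{2l+1},\ 3^{2l}-(-1)^l3^l;\ 3^{4l-1}-(-1)^l3^{3l}+2\cdot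 3^{2l-1},\ 3^{4l-1}-(-1)^l3^{3l}+5\cdot 3^{2l-1}\big)$, $\big(3^{2l+1},\ 3^{2l};\ 3^{4l-1}-3^{2l-1},\ 3^{4l-1}+2\cdot 3^{2l-1}\big)$.
   Context: $J$ is the all-ones matrix. A symmetric partial geometric design with parameters $(v,k;\alpha,\beta)$ is a design with $v$ points and $v$ blocks, each block of size $k$ and each point in $k$ blocks, whose incidence matrix $N$ satisfies $NN^TN=\beta N+\alpha(J-N)$. *)

(* Defs.v *)
From HB Require Import structures.
From mathcomp Require Import all_boot all_order all_algebra all_fingroup.
Set Implicit Arguments. Unset Strict Implicit. Unset Printing Implicit Defensive.
Import Order.TTheory GRing.Theory Num.Theory.
Local Open Scope ring_scope.

Definition KSDpt (l : nat) := {ffun 'I_(2 * l + 1) -> 'I_3}.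

Definition hamming (l : nat) (x y : KSDpt l) : nat := #|[set i | x i != y i]|.

Definition KSDrel (l j : nat) (x y : KSDpt l) : bool :=
  if j == 0%N then x == y
  else (0 < hamming x y)%N && (hamming x y == j %[mod 3]).

Definition KSDadj (l j : nat) : 'M[int]_#|KSDpt l| :=
  \matrix_(i, k) (KSDrel j (enum_val i) (enum_val k))%:R.

Definition Jmx (n : nat) : 'M[int]_n := const_mx 1.

(* N (n x n) is the incidence matrix of a symmetric partial geometric design with
   parameters (v,k;alpha,beta): v points, v blocks, 0/1 entries, every block of
   size k, every point in k blocks, and N N^T N = beta N + alpha (J - N). *)
Definition sym_partial_geometric (n v k : nat) (alpha beta : int) (N : 'M[int]_n) : Prop :=
  [/\ n = v,
      forall i j, N i j = 0 \/ N i j = 1,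
      forall i, \sum_j N i j = k%:Z,
      forall j, \sum_i N i j = k%:Z &
      N *m N^T *m N = beta *: N + alpha *: (Jmx n - N)].

Definition design_iso (n : nat) (N N' : 'M[int]_n) : Prop :=
  exists (s t : 'S_n), forall i j, N' i j = N (s i) (t j).

(* Main.v *)
Require Import Defs.
From HB Require Import structures.
From mathcomp Require Import all_boot all_order all_algebra all_fingroup.
From mathcomp Require Import algC ring zify.
Import Order.TTheory GRing.Theory Num.Theory.
Local Open Scope ring_scope.

Definition ww : algC := (-1 + 'i * sqrtC 3) / 2.
Lemma ww2 : ww ^+ 2 = - ww - 1.
Proof.
rewrite /ww; have h1 := sqrtCK (3 : algC); have h2 : ('i : algC) ^+ 2 = -1 by rewrite sqrCi.
field: h1 h2.
by [].

Qed.

Lemma ww3 : ww ^+ 3 = 1.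
Proof. have h := ww2. ring: h. Qed.

Lemma hamming_le l (x y : KSDpt l) : (hamming x y <= 2 * l + 1)%N.
Proof. by rewrite /hamming; apply: leq_trans (max_card _) _; rewrite card_ord. Qed.

Lemma hammingC l (x y : KSDpt l) : hamming x y = hamming y x.
Proof. by rewrite /hamming; apply: eq_card => i; rewrite !inE eq_sym. Qed.

Lemma hamming0 l (x y : KSDpt l) : (hamming x y == 0)%N = (x == y).
Proof.
rewrite /hamming cards_eq0; apply/eqP/eqP => [h|->].
  apply/ffunP => i; apply/eqP; apply: contraT => hi.
  by rewrite -(in_set0 i) -h inE.
by apply/setP => i; rewrite !inE eqxx.
Qed.

Lemma powh l (a : algC) (x y : KSDpt l) :
  a ^+ hamming x y = \prod_i (if x i != y i then a else 1).
Proof.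
rewrite /hamming -prodr_const big_mkcond /=; apply: eq_bigr => i _; by rewrite inE.
Qed.

Lemma sum3 (a b : algC) (u v : 'I_3) :
  \sum_c ((if u != c then a else 1) * (if c != v then b else 1)) =
  if u == v then 1 + 2 * a * b else a + b + a * b.
Proof.
rewrite !big_ord_recr big_ord0 /=.
case: u v => [[|[|[|?]]] ?] [[|[|[|?]]] ?] //=; rewrite /eq_op /=; ring.
Qed.

Definition Mx l (a : algC) : 'M[algC]_#|KSDpt l| :=
  \matrix_(i, k) a ^+ hamming (enum_val i) (enum_val k).

Lemma prod_if l (P Q : algC) (x y : KSDpt l) :
  \prod_i (if x i == y i then P else Q) =
  P ^+ (2 * l + 1 - hamming x y) * Q ^+ hamming x y.
Proof.
rewrite (bigID (fun i => x i != y i)) /=.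
rewrite (eq_bigr (fun _ => Q)); last by move=> i /negbTE ->.
rewrite [X in _ * X](eq_bigr (fun _ => P)); last by move=> i /negPn ->.
rewrite (prodr_const (fun i => x i != y i)) (prodr_const (fun i => ~~ (x i != y i))) mulrC; congr (_ ^+ _ * _ ^+ _).
  have h := cardC (fun i : 'I_(2 * l + 1) => x i != y i); rewrite card_ord in h.
  have hb : #|(fun i : 'I_(2 * l + 1) => ~~ (x i != y i))| = #|[predC (fun i : 'I_(2 * l + 1) => x i != y i)]|.
    by apply: eq_card => i; rewrite !inE.
  have ha : hamming x y = #|(fun i : 'I_(2 * l + 1) => x i != y i)| by rewrite /hamming cardsE.
  by rewrite hb ha -[X in (X - _)%N]h addKn.
by rewrite /hamming cardsE.
Qed.

Lemma mulMx l (a b : algC) i k :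
  (Mx l a *m Mx l b) i k =
  (1 + 2 * a * b) ^+ (2 * l + 1 - hamming (enum_val i) (enum_val k)) *
  (a + b + a * b) ^+ hamming (enum_val i) (enum_val k).
Proof.
rewrite mxE; under eq_bigr do rewrite !mxE.
rewrite -(big_enum_val (fun z => a ^+ hamming (enum_val i) z * b ^+ hamming z (enum_val k))) /=.
under eq_bigr do rewrite !powh -big_split /=.
rewrite -prod_if.
rewrite -(bigA_distr_bigA (fun j c => (if enum_val i j != c then a else 1) * (if c != enum_val k j then b else 1))) /=.
by apply: eq_bigr => j _; rewrite sum3.
Qed.

Lemma expr_split (p : algC) m D : (m <= D)%N -> p ^+ (D - m) * p ^+ m = p ^+ D.
Proof. by move=> h; rewrite -exprD subnK. Qed.

Lemma MxM l (a b c e : algC) :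
  (forall m, (m <= 2 * l + 1)%N -> (1 + 2 * a * b) ^+ (2 * l + 1 - m) * (a + b + a * b) ^+ m = c * e ^+ m) ->
  Mx l a *m Mx l b = c *: Mx l e.
Proof. by move=> h; apply/matrixP=> i k; rewrite mulMx h ?hamming_le // !mxE. Qed.

Lemma Mx0 l : Mx l 0 = 1%:M.
Proof.
apply/matrixP=> i k; rewrite !mxE expr0n hamming0 (inj_eq enum_val_inj).
by case: (i == k).
Qed.

Lemma expr_split0 (p : algC) m D : (m <= D)%N -> p ^+ (D - m) * p ^+ m = p ^+ D.
Proof. by move=> h; rewrite -exprD subnK. Qed.


Lemma MxM' l (a b p e : algC) : 1 + 2 * a * b = p -> a + b + a * b = p * e ->
  Mx l a *m Mx l b = p ^+ (2 * l + 1) *: Mx l e.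
Proof.
move=> h1 h2; apply: MxM => m hm.
by rewrite h1 h2 exprMn mulrA expr_split.
Qed.

Section Table.
Variable l : nat.
Local Notation d := (2 * l + 1)%N.
Local Notation w := ww.
Local Notation E1 := (Mx l 1).
Local Notation P := (Mx l ww).
Local Notation Q := (Mx l (ww ^+ 2)).

Let h2 := ww2.

Lemma E1E1 : E1 *m E1 = (3 ^+ d) *: E1.
Proof. by apply: MxM'; ring. Qed.
Lemma E1P : E1 *m P = ((1 + 2 * w) ^+ d) *: E1.
Proof. by apply: MxM'; ring. Qed.
Lemma PE1 : P *m E1 = ((1 + 2 * w) ^+ d) *: E1.
Proof. by apply: MxM'; ring. Qed.
Lemma E1Q : E1 *m Q = ((1 + 2 * w ^+ 2) ^+ d) *: E1.
Proof. by apply: MxM'; ring. Qed.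
Lemma QE1 : Q *m E1 = ((1 + 2 * w ^+ 2) ^+ d) *: E1.
Proof. by apply: MxM'; ring. Qed.
Lemma PP : P *m P = ((1 + 2 * w ^+ 2) ^+ d) *: Q.
Proof. by apply: MxM'; ring: h2. Qed.
Lemma QQ : Q *m Q = ((1 + 2 * w) ^+ d) *: P.
Proof. by apply: MxM'; ring: h2. Qed.
Lemma PQ : P *m Q = (3 ^+ d) *: 1%:M.
Proof. by rewrite -Mx0; apply: MxM'; ring: h2. Qed.
Lemma QP : Q *m P = (3 ^+ d) *: 1%:M.
Proof. by rewrite -Mx0; apply: MxM'; ring: h2. Qed.

End Table.

Definition Comb l (c1 c2 c3 c4 : algC) : 'M[algC]_#|KSDpt l| :=
  c1 *: Mx l 1 + c2 *: Mx l ww + c3 *: Mx l (ww ^+ 2) + c4 *: 1%:M.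

Lemma CombM l u1 u2 u3 u4 v1 v2 v3 v4 :
  let t := 3 ^+ (2 * l + 1) in
  let G := (1 + 2 * ww) ^+ (2 * l + 1) in
  let H := (1 + 2 * ww ^+ 2) ^+ (2 * l + 1) in
  Comb l u1 u2 u3 u4 *m Comb l v1 v2 v3 v4 =
  Comb l (u1 * v1 * t + u1 * v2 * G + u1 * v3 * H + u1 * v4 + u2 * v1 * G + u3 * v1 * H + u4 * v1)
         (u2 * v4 + u3 * v3 * G + u4 * v2)
         (u2 * v2 * H + u3 * v4 + u4 * v3)
         (u2 * v3 * t + u3 * v2 * t + u4 * v4).
Proof.
move=> t G H.
rewrite /Comb !mulmxDl !mulmxDr -!scalemxAl -!scalemxAr.
rewrite E1E1 E1P PE1 E1Q QE1 PP QQ PQ QP !mulmx1 !mul1mx.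
rewrite -/t -/G -/H.
move: (Mx l 1) (Mx l ww) (Mx l (ww ^+ 2)) (1%:M : 'M[algC]_#|KSDpt l|) => A B C D.
apply/matrixP => i k; rewrite !mxE; ring.
Qed.

Lemma CombM2 l u1 u2 u3 u4 v1 v2 v3 v4 :
  Comb l u1 u2 u3 u4 *m Comb l v1 v2 v3 v4 =
  Comb l (u1 * v1 * (3 ^+ (2 * l + 1)) + u1 * v2 * ((1 + 2 * ww) ^+ (2 * l + 1)) + u1 * v3 * ((1 + 2 * ww ^+ 2) ^+ (2 * l + 1)) + u1 * v4 + u2 * v1 * ((1 + 2 * ww) ^+ (2 * l + 1)) + u3 * v1 * ((1 + 2 * ww ^+ 2) ^+ (2 * l + 1)) + u4 * v1)
         (u2 * v4 + u3 * v3 * ((1 + 2 * ww) ^+ (2 * l + 1)) + u4 * v2)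
         (u2 * v2 * ((1 + 2 * ww ^+ 2) ^+ (2 * l + 1)) + u3 * v4 + u4 * v3)
         (u2 * v3 * (3 ^+ (2 * l + 1)) + u3 * v2 * (3 ^+ (2 * l + 1)) + u4 * v4).
Proof. exact: CombM. Qed.

Lemma wpow m : ww ^+ m = ww ^+ (m %% 3)%N.
Proof. by rewrite {1}(divn_eq m 3) exprD mulnC exprM ww3 expr1n mul1r. Qed.

Lemma mod3_cases m : [\/ (m %% 3 = 0)%N, (m %% 3 = 1)%N | (m %% 3 = 2)%N].
Proof.
have : (m %% 3 < 3)%N by rewrite ltn_mod.
by case: (m %% 3)%N => [|[|[|r]]] //= _; [constructor 1|constructor 2|constructor 3].
Qed.

Lemma ind1 m : (((0 < m)%N && (m == 1 %[mod 3])%N)%:R : algC) =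
  1/3 + ww ^+ 2 / 3 * ww ^+ m + ww / 3 * (ww ^+ 2) ^+ m.
Proof.
have h2 := ww2.
rewrite -exprM mulnC exprM (wpow m).
have h0 : ((0 < m) && (m == 1 %[mod 3]))%N = (m %% 3 == 1)%N.
  by case: m => [|m] //=.
rewrite h0; case: (mod3_cases m) => ->; rewrite /=; by field: h2.
Qed.

Lemma ind2 m : (((0 < m)%N && (m == 2 %[mod 3])%N)%:R : algC) =
  1/3 + ww / 3 * ww ^+ m + ww ^+ 2 / 3 * (ww ^+ 2) ^+ m.
Proof.
have h2 := ww2.
rewrite -exprM mulnC exprM (wpow m).
have h0 : ((0 < m) && (m == 2 %[mod 3]))%N = (m %% 3 == 2)%N.
  by case: m => [|m] //=.
rewrite h0; case: (mod3_cases m) => ->; rewrite /=; by field: h2.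
Qed.

Lemma ind3 m : (((0 < m)%N && (m == 3 %[mod 3])%N)%:R + (m == 0)%N%:R : algC) =
  1/3 + 1 / 3 * ww ^+ m + 1 / 3 * (ww ^+ 2) ^+ m.
Proof.
have h2 := ww2.
rewrite -exprM mulnC exprM (wpow m).
have h0 : ((0 < m) && (m == 3 %[mod 3]))%N%:R + (m == 0)%N%:R = (m %% 3 == 0)%N%:R :> algC.
  by case: m => [|m] //=; rewrite ?add0r ?addr0.
rewrite h0; case: (mod3_cases m) => ->; rewrite /=; by field: h2.
Qed.

Lemma mapA1 l : map_mx intr (KSDadj l 1) = Comb l (1/3) (ww ^+ 2 / 3) (ww / 3) 0.
Proof.
apply/matrixP => i k; rewrite /Comb /Mx /KSDadj !mxE /KSDrel /= rmorph_nat ind1.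
by rewrite expr1n mulr1 mul0r addr0.
Qed.

Lemma mapA2 l : map_mx intr (KSDadj l 2) = Comb l (1/3) (ww / 3) (ww ^+ 2 / 3) 0.
Proof.
apply/matrixP => i k; rewrite /Comb /Mx /KSDadj !mxE /KSDrel /= rmorph_nat ind2.
by rewrite expr1n mulr1 mul0r addr0.
Qed.

Lemma mapA3 l : map_mx intr (KSDadj l 3 + 1%:M) = Comb l (1/3) (1 / 3) (1 / 3) 0.
Proof.
apply/matrixP => i k; rewrite /Comb /Mx /KSDadj !mxE /KSDrel /=.
rewrite rmorphD rmorph_nat /= rmorphMn rmorph1 -(inj_eq enum_val_inj) -hamming0 -[1 *+ _]/(_%:R) ind3.
by rewrite expr1n mulr1 mul0r addr0.
Qed.

Lemma mapJ l : map_mx intr (Jmx #|KSDpt l|) = Comb l 1 0 0 0.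
Proof.
apply/matrixP => i k; rewrite /Comb /Mx /Jmx !mxE rmorph1.
by rewrite expr1n mulr1 !mul0r !addr0.
Qed.

Lemma factG l : (1 + 2 * ww) ^+ (2 * l + 1) = (1 + 2 * ww) * ((-1) ^+ l * 3 ^+ l).
Proof.
have h2 := ww2.
rewrite addn1 exprS exprM (_ : (1 + 2 * ww) ^+ 2 = -3); last by ring: h2.
by rewrite -exprMn mulN1r.
Qed.

Lemma factH l : (1 + 2 * ww ^+ 2) ^+ (2 * l + 1) = - ((1 + 2 * ww) * ((-1) ^+ l * 3 ^+ l)).
Proof.
have h2 := ww2.
rewrite (_ : 1 + 2 * ww ^+ 2 = - (1 + 2 * ww)); last by ring: h2.
by rewrite (exprNn (1 + 2 * ww)) factG -[(-1) ^+ (2 * l + 1)]signr_odd oddD oddM /= expr1 mulN1r.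
Qed.

Lemma pow3 (k a b : nat) : (3 : algC) ^+ (a * k + b) = 3 ^+ b * (3 ^+ k) ^+ a.
Proof. by rewrite exprD mulnC exprM mulrC. Qed.


Lemma sgn2 k : ((-1) ^+ k.+1 : algC) ^+ 2 = 1.
Proof. by rewrite -exprM mulnC exprM sqrrN !expr1n. Qed.
Lemma e1 k : (3 : algC) ^+ (4 * k.+1 - 1) = 27 * (3 ^+ k) ^+ 4.
Proof. by rewrite (_ : (4 * k.+1 - 1 = 4 * k + 3)%N) ?pow3; [ring | lia]. Qed.
Lemma e2 k : (3 : algC) ^+ (2 * k.+1 - 1) = 3 * (3 ^+ k) ^+ 2.
Proof. by rewrite (_ : (2 * k.+1 - 1 = 2 * k + 1)%N) ?pow3; [ring | lia]. Qed.
Lemma e3 k : (3 : algC) ^+ (3 * k.+1) = 27 * (3 ^+ k) ^+ 3.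
Proof. by rewrite (_ : (3 * k.+1 = 3 * k + 3)%N) ?pow3; [ring | lia]. Qed.
Lemma e4 k : (3 : algC) ^+ (2 * k.+1 + 1) = 27 * (3 ^+ k) ^+ 2.
Proof. by rewrite (_ : (2 * k.+1 + 1 = 2 * k + 3)%N) ?pow3; [ring | lia]. Qed.
Lemma e6 k : (3 : algC) ^+ (2 * k.+1) = 9 * (3 ^+ k) ^+ 2.
Proof. by rewrite (_ : (2 * k.+1 = 2 * k + 2)%N) ?pow3; [ring | lia]. Qed.
Lemma e5 k : (3 : algC) ^+ k.+1 = 3 * 3 ^+ k.
Proof. by rewrite exprS. Qed.

Ltac kfin k :=
  rewrite ?CombM2 ?factG ?factH ?(e1 k) ?(e2 k) ?(e3 k) ?(e4 k) ?(e6 k) ?(e5 k);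
  rewrite /Comb;
  move: (Mx k.+1 1) (Mx k.+1 ww) (Mx k.+1 (ww ^+ 2)) (1%:M : 'M[algC]_#|KSDpt k.+1|) => ? ? ? ?;
  apply/matrixP => ? ?; rewrite !mxE;
  by field: ww2 (sgn2 k).

Lemma cube1 (k : nat) :
  let N := Comb k.+1 (1/3) (ww ^+ 2 / 3) (ww / 3) 0 in
  N *m N *m N =
  (3 ^+ (4 * k.+1 - 1) + (-1) ^+ k.+1 * 3 ^+ (3 * k.+1) + 5 * 3 ^+ (2 * k.+1 - 1)) *: N +
  (3 ^+ (4 * k.+1 - 1) + (-1) ^+ k.+1 * 3 ^+ (3 * k.+1) + 2 * 3 ^+ (2 * k.+1 - 1)) *: (Comb k.+1 1 0 0 0 - N).
Proof. move=> N; rewrite /N; kfin k. Qed.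

Lemma cube2 (k : nat) :
  let N := Comb k.+1 (1/3) (ww / 3) (ww ^+ 2 / 3) 0 in
  N *m N *m N =
  (3 ^+ (4 * k.+1 - 1) - (-1) ^+ k.+1 * 3 ^+ (3 * k.+1) + 5 * 3 ^+ (2 * k.+1 - 1)) *: N +
  (3 ^+ (4 * k.+1 - 1) - (-1) ^+ k.+1 * 3 ^+ (3 * k.+1) + 2 * 3 ^+ (2 * k.+1 - 1)) *: (Comb k.+1 1 0 0 0 - N).
Proof. move=> N; rewrite /N; kfin k. Qed.

Lemma cube3 (k : nat) :
  let N := Comb k.+1 (1/3) (1 / 3) (1 / 3) 0 in
  N *m N *m N =
  (3 ^+ (4 * k.+1 - 1) + 2 * 3 ^+ (2 * k.+1 - 1)) *: N +
  (3 ^+ (4 * k.+1 - 1) - 3 ^+ (2 * k.+1 - 1)) *: (Comb k.+1 1 0 0 0 - N).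
Proof. move=> N; rewrite /N; kfin k. Qed.

Lemma rows1 (k : nat) :
  let N := Comb k.+1 (1/3) (ww ^+ 2 / 3) (ww / 3) 0 in
  N *m Comb k.+1 1 0 0 0 = (3 ^+ (2 * k.+1) + (-1) ^+ k.+1 * 3 ^+ k.+1) *: Comb k.+1 1 0 0 0 /\
  Comb k.+1 1 0 0 0 *m N = (3 ^+ (2 * k.+1) + (-1) ^+ k.+1 * 3 ^+ k.+1) *: Comb k.+1 1 0 0 0.
Proof. move=> N; rewrite /N; split; kfin k. Qed.

Lemma rows2 (k : nat) :
  let N := Comb k.+1 (1/3) (ww / 3) (ww ^+ 2 / 3) 0 in
  N *m Comb k.+1 1 0 0 0 = (3 ^+ (2 * k.+1) - (-1) ^+ k.+1 * 3 ^+ k.+1) *: Comb k.+1 1 0 0 0 /\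
  Comb k.+1 1 0 0 0 *m N = (3 ^+ (2 * k.+1) - (-1) ^+ k.+1 * 3 ^+ k.+1) *: Comb k.+1 1 0 0 0.
Proof. move=> N; rewrite /N; split; kfin k. Qed.

Lemma rows3 (k : nat) :
  let N := Comb k.+1 (1/3) (1 / 3) (1 / 3) 0 in
  N *m Comb k.+1 1 0 0 0 = 3 ^+ (2 * k.+1) *: Comb k.+1 1 0 0 0 /\
  Comb k.+1 1 0 0 0 *m N = 3 ^+ (2 * k.+1) *: Comb k.+1 1 0 0 0.
Proof. move=> N; rewrite /N; split; kfin k. Qed.

Lemma intmx_eq n (A B : 'M[int]_n) : map_mx (intr : int -> algC) A = map_mx intr B -> A = B.
Proof.
move=> h; apply/matrixP => i j; apply: (@intr_inj algC).
by have := congr1 (fun M : 'M[algC]_n => M i j) h; rewrite !mxE.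
Qed.

Lemma intr3 n : ((3%:Z ^+ n : int)%:~R : algC) = 3 ^+ n.
Proof. by rewrite rmorphXn. Qed.

Lemma test k :
  let A1 := KSDadj k.+1 1 in
  let J := Jmx #|KSDpt k.+1| in
  let t (n : nat) : int := (3%:Z) ^+ n in
  let s : int := (-1) ^+ k.+1 in
  A1 *m A1 *m A1 =
        (t (4 * k.+1 - 1)%N + s * t (3 * k.+1)%N + 5 * t (2 * k.+1 - 1)%N) *: A1
      + (t (4 * k.+1 - 1)%N + s * t (3 * k.+1)%N + 2 * t (2 * k.+1 - 1)%N) *: (J - A1).
Proof.
move=> A1 J t s; apply: intmx_eq.
rewrite !map_mxM map_mxD !map_mxZ map_mxB /A1 /J mapA1 mapJ /t /s.
rewrite !rmorphD !rmorphM /= !intr3 rmorphXn rmorphN rmorph1.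
Show.
exact: cube1.
Qed.

Lemma PoszX (a n : nat) : ((a ^ n)%N : int) = (a : int) ^+ n.
Proof. by elim: n => // n IH; rewrite expnS exprS PoszM IH. Qed.

Lemma ks1 k : ((3%:Z) ^+ (2 * k.+1) + (-1) ^+ k.+1 * 3%:Z ^+ k.+1 : int) =
  (if odd k.+1 then 3 ^ (2 * k.+1) - 3 ^ k.+1 else 3 ^ (2 * k.+1) + 3 ^ k.+1)%N.
Proof.
have le : (3 ^ k.+1 <= 3 ^ (2 * k.+1))%N by rewrite leq_exp2l //; lia.
rewrite -signr_odd; case: (odd k.+1) => /=.
  by rewrite -subzn // !PoszX expr1 mulN1r.
by rewrite PoszD !PoszX expr0 mul1r.
Qed.

Lemma ks2 k : ((3%:Z) ^+ (2 * k.+1) - (-1) ^+ k.+1 * 3%:Z ^+ k.+1 : int) =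
  (if odd k.+1 then 3 ^ (2 * k.+1) + 3 ^ k.+1 else 3 ^ (2 * k.+1) - 3 ^ k.+1)%N.
Proof.
have le : (3 ^ k.+1 <= 3 ^ (2 * k.+1))%N by rewrite leq_exp2l //; lia.
rewrite -signr_odd; case: (odd k.+1) => /=.
  by rewrite PoszD !PoszX expr1 mulN1r opprK.
by rewrite -subzn // !PoszX expr0 mul1r.
Qed.

Lemma rowsum n (N : 'M[int]_n) c : N *m Jmx n = c *: Jmx n -> forall i, \sum_j N i j = c.
Proof.
move=> h i; have := congr1 (fun M : 'M[int]_n => M i i) h; rewrite !mxE.
by under eq_bigr do rewrite mxE mulr1; rewrite mulr1.
Qed.

Lemma colsum n (N : 'M[int]_n) c : Jmx n *m N = c *: Jmx n -> forall j, \sum_i N i j = c.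
Proof.
move=> h i; have := congr1 (fun M : 'M[int]_n => M i i) h; rewrite !mxE.
by under eq_bigr do rewrite mxE mul1r; rewrite mulr1.
Qed.

Lemma iso_rows n (N N' : 'M[int]_n) c c' (i0 : 'I_n) :
  (forall i, \sum_j N i j = c) -> (forall i, \sum_j N' i j = c') -> design_iso N N' -> c = c'.
Proof.
move=> h h' [s [t e]]; rewrite -(h (s i0)) -(h' i0).
under [RHS]eq_bigr do rewrite e.
exact: (reindex_inj (@perm_inj _ t)).
Qed.

Lemma adj_sym l j : (KSDadj l j)^T = KSDadj l j.
Proof.
by apply/matrixP => x y; rewrite !mxE /KSDrel (hammingC _ (enum_val y)) (eq_sym (enum_val y)).
Qed.

Lemma adj01 l j x y : KSDadj l j x y = 0 \/ KSDadj l j x y = 1.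
Proof. by rewrite mxE; case: (KSDrel _ _ _); [right|left]. Qed.

Lemma adj3I01 l x y : (KSDadj l 3 + 1%:M) x y = 0 \/ (KSDadj l 3 + 1%:M) x y = 1.
Proof.
rewrite !mxE /KSDrel /=; case e: (x == y).
  move/eqP: e => ->; have /eqP -> : hamming (enum_val y) (enum_val y) == 0%N by rewrite hamming0.
  by right.
by case: (_ && _); [right|left].
Qed.

Lemma cubeA1 k :
  let A1 := KSDadj k.+1 1 in
  let J := Jmx #|KSDpt k.+1| in
  let t (n : nat) : int := (3%:Z) ^+ n in
  let s : int := (-1) ^+ k.+1 in
  A1 *m A1 *m A1 =
        (t (4 * k.+1 - 1)%N + s * t (3 * k.+1)%N + 5 * t (2 * k.+1 - 1)%N) *: A1
      + (t (4 * k.+1 - 1)%N + s * t (3 * k.+1)%N + 2 * t (2 * k.+1 - 1)%N) *: (J - A1).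
Proof.
move=> A1 J t s; apply: intmx_eq.
rewrite !map_mxM map_mxD !map_mxZ map_mxB /A1 /J mapA1 mapJ /t /s.
rewrite !rmorphD !rmorphM /= !intr3 rmorphXn rmorphN rmorph1.
exact: cube1.
Qed.

Lemma cubeA2 k :
  let A2 := KSDadj k.+1 2 in
  let J := Jmx #|KSDpt k.+1| in
  let t (n : nat) : int := (3%:Z) ^+ n in
  let s : int := (-1) ^+ k.+1 in
  A2 *m A2 *m A2 =
        (t (4 * k.+1 - 1)%N - s * t (3 * k.+1)%N + 5 * t (2 * k.+1 - 1)%N) *: A2
      + (t (4 * k.+1 - 1)%N - s * t (3 * k.+1)%N + 2 * t (2 * k.+1 - 1)%N) *: (J - A2).
Proof.
move=> A2 J t s; apply: intmx_eq.
rewrite !map_mxM map_mxD !map_mxZ map_mxB /A2 /J mapA2 mapJ /t /s.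
rewrite !rmorphD !rmorphN !rmorphM /= !intr3 rmorphXn rmorphN rmorph1.
exact: cube2.
Qed.

Lemma cubeA3 k :
  let A3I := KSDadj k.+1 3 + 1%:M in
  let J := Jmx #|KSDpt k.+1| in
  let t (n : nat) : int := (3%:Z) ^+ n in
  A3I *m A3I *m A3I =
        (t (4 * k.+1 - 1)%N + 2 * t (2 * k.+1 - 1)%N) *: A3I
      + (t (4 * k.+1 - 1)%N - t (2 * k.+1 - 1)%N) *: (J - A3I).
Proof.
move=> A3I J t; apply: intmx_eq.
rewrite !map_mxM [map_mx _ (_ *: _ + _)]map_mxD !map_mxZ map_mxB /A3I /J mapA3 mapJ /t.
rewrite !rmorphD !rmorphN !rmorphM /= !intr3.
exact: cube3.
Qed.

Lemma rowA1 k : let J := Jmx #|KSDpt k.+1| in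
  KSDadj k.+1 1 *m J = ((3%:Z) ^+ (2 * k.+1) + (-1) ^+ k.+1 * 3%:Z ^+ k.+1) *: J /\
  J *m KSDadj k.+1 1 = ((3%:Z) ^+ (2 * k.+1) + (-1) ^+ k.+1 * 3%:Z ^+ k.+1) *: J.
Proof.
move=> J; have [h1 h2] := rows1 k; split; apply: intmx_eq;
rewrite !map_mxM !map_mxZ /J mapA1 mapJ !rmorphD !rmorphM /= !intr3 rmorphXn rmorphN rmorph1;
by [rewrite h1 | rewrite h2].
Qed.

Lemma rowA2 k : let J := Jmx #|KSDpt k.+1| in
  KSDadj k.+1 2 *m J = ((3%:Z) ^+ (2 * k.+1) - (-1) ^+ k.+1 * 3%:Z ^+ k.+1) *: J /\
  J *m KSDadj k.+1 2 = ((3%:Z) ^+ (2 * k.+1) - (-1) ^+ k.+1 * 3%:Z ^+ k.+1) *: J.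
Proof.
move=> J; have [h1 h2] := rows2 k; split; apply: intmx_eq;
rewrite !map_mxM !map_mxZ /J mapA2 mapJ !rmorphD !rmorphN !rmorphM /= !intr3 rmorphXn rmorphN rmorph1;
by [rewrite h1 | rewrite h2].
Qed.

Lemma rowA3 k : let J := Jmx #|KSDpt k.+1| in
  (KSDadj k.+1 3 + 1%:M) *m J = ((3 ^ (2 * k.+1))%N : int) *: J /\
  J *m (KSDadj k.+1 3 + 1%:M) = ((3 ^ (2 * k.+1))%N : int) *: J.
Proof.
move=> J; have [h1 h2] := rows3 k; split; apply: intmx_eq;
  rewrite !map_mxM !map_mxZ /J mapA3 mapJ PoszX rmorphXn;
  by [rewrite h1 | rewrite h2].
Qed.

Lemma design_of n v kk (aa bb : int) (N : 'M[int]_n) :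
  n = v -> (forall i j, N i j = 0 \/ N i j = 1) -> N^T = N ->
  N *m Jmx n = kk%:Z *: Jmx n -> Jmx n *m N = kk%:Z *: Jmx n ->
  N *m N *m N = bb *: N + aa *: (Jmx n - N) ->
  sym_partial_geometric v kk aa bb N.
Proof.
move=> hv h01 hT hr hc hc3; split => //; [exact: rowsum hr | exact: colsum hc | by rewrite hT].
Qed.

Lemma sgn_cases k : ((-1) ^+ k : int) = 1 \/ ((-1) ^+ k : int) = -1.
Proof. by rewrite -signr_odd; case: (odd k); [right|left]. Qed.

Lemma neq_aux (y x s : int) : 0 < x -> s = 1 \/ s = -1 ->
  [/\ y + s * x <> y - s * x, y + s * x <> y & y - s * x <> y].
Proof. by move=> hx [->|->]; split; lia. Qed.

Theorem corollary6p3 (l : nat) (hl : (1 <= l)%N) :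
  let A1 := KSDadj l 1 in
  let A2 := KSDadj l 2 in
  let A3I := KSDadj l 3 + 1%:M in
  let J := Jmx #|KSDpt l| in
  let t (n : nat) : int := (3%:Z) ^+ n in
  let s : int := (-1) ^+ l in
  [/\ A1 *m A1 *m A1 =
        (t (4 * l - 1)%N + s * t (3 * l)%N + 5 * t (2 * l - 1)%N) *: A1
      + (t (4 * l - 1)%N + s * t (3 * l)%N + 2 * t (2 * l - 1)%N) *: (J - A1),
      A2 *m A2 *m A2 =
        (t (4 * l - 1)%N - s * t (3 * l)%N + 5 * t (2 * l - 1)%N) *: A2
      + (t (4 * l - 1)%N - s * t (3 * l)%N + 2 * t (2 * l - 1)%N) *: (J - A2),
      A3I *m A3I *m A3I =
        (t (4 * l - 1)%N + 2 * t (2 * l - 1)%N) *: A3I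
      + (t (4 * l - 1)%N - t (2 * l - 1)%N) *: (J - A3I),
      [/\ sym_partial_geometric (3 ^ (2 * l + 1))
            (if odd l then 3 ^ (2 * l) - 3 ^ l else 3 ^ (2 * l) + 3 ^ l)%N
            (t (4 * l - 1)%N + s * t (3 * l)%N + 2 * t (2 * l - 1)%N)
            (t (4 * l - 1)%N + s * t (3 * l)%N + 5 * t (2 * l - 1)%N) A1,
          sym_partial_geometric (3 ^ (2 * l + 1))
            (if odd l then 3 ^ (2 * l) + 3 ^ l else 3 ^ (2 * l) - 3 ^ l)%N
            (t (4 * l - 1)%N - s * t (3 * l)%N + 2 * t (2 * l - 1)%N)
            (t (4 * l - 1)%N - s * t (3 * l)%N + 5 * t (2 * l - 1)%N) A2 &
          sym_partial_geometric (3 ^ (2 * l + 1)) (3 ^ (2 * l))%N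
            (t (4 * l - 1)%N - t (2 * l - 1)%N)
            (t (4 * l - 1)%N + 2 * t (2 * l - 1)%N) A3I] &
      [/\ ~ design_iso A1 A2, ~ design_iso A1 A3I & ~ design_iso A2 A3I]].
Proof.
case: l hl => [//|k] _.
move=> A1 A2 A3I J t s.
have c1 := cubeA1 k; have c2 := cubeA2 k; have c3 := cubeA3 k.
have [r1 r1'] := rowA1 k; have [r2 r2'] := rowA2 k; have [r3 r3'] := rowA3 k.
have hv : #|KSDpt k.+1| = (3 ^ (2 * k.+1 + 1))%N by rewrite card_ffun !card_ord.
pose i0 : 'I_#|KSDpt k.+1| := enum_rank [ffun _ : 'I_(2 * k.+1 + 1) => (ord0 : 'I_3)].
have s3 : A3I^T = A3I by rewrite /A3I linearD /= adj_sym trmx1.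
have [n12 n13 n23] := neq_aux (3%:Z ^+ (2 * k.+1)) _ _ (exprn_gt0 k.+1 (isT : 0 < 3%:Z)) (sgn_cases k.+1).
have ro1 := rowsum _ _ _ r1; have ro2 := rowsum _ _ _ r2; have ro3 := rowsum _ _ _ r3.
rewrite PoszX in ro3.
split => //.
- split.
  + apply: design_of => //; [exact: adj01 | exact: adj_sym | by rewrite -ks1 | by rewrite -ks1].
  + apply: design_of => //; [exact: adj01 | exact: adj_sym | by rewrite -ks2 | by rewrite -ks2].
  + by apply: design_of => //; exact: adj3I01.
- split.
  + by move=> hi; apply: n12; exact: (iso_rows _ _ _ _ _ i0 ro1 ro2 hi).
  + by move=> hi; apply: n13; exact: (iso_rows _ _ _ _ _ i0 ro1 ro3 hi).
  + by move=> hi; apply: n23; exact: (iso_rows _ _ _ _ _ i0 ro2 ro3 hi).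
Qed.
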